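(* Let $\nu>0$, let $\mathbf{f}\in L^{\infty}(\mathbb{R}_+;\mathbf{V}_h^* )$, and let $\mathbf{u}_h^{0}=\mathbf{u}_h^{-1}=\mathbf{u}_h^{-2}\in \mathbf{V}_h$ be given initial data. For any time step $\Delta t>0$, let $(\mathbf{u}_h^{n+1},p_h^{n+1})\in \mathbf{X}_h\times Q_h$, $n\ge 0$, be the solution of the extrapolated blended BDF (BLEBDF) scheme for the Navier–Stokes equations: for all $(\mathbf{v}_h,q_h)\in \mathbf{X}_h\times Q_h$, $$\Big(\tfrac{\frac{5}{3}\mathbf{u}_h^{n+1}-\frac{5}{2}\mathbf{u}_h^n+\mathbf{u}_h^{n-1}-\frac{1}{6}\mathbf{u}_h^{n-2}}{\Delta t},\mathbf{v}_h\Big)+\nu(\nabla \mathbf{u}_h^{n+1},\nabla\mathbf{v}_h)+b_1(3\mathbf{u}_h^n-3\mathbf{u}_h^{n-1}+\mathbf{u}_h^{n-2},\mathbf{u}_h^{n+1},\mathbf{v}_h)-(p_h^{n+1},\nabla\cdot\mathbf{v}_h)=(\mathbf{f}^{n+1},\mathbf{v}_h),$$ $$(\nabla\cdot \mathbf{u}_h^{n+1},q_h)=0,$$ where $\mathbf{f}^{n+1}=\mathbf{f}(t^{n+1})$, $t^{n}=n\Delta t$. Set $\mathcal{U}_{k}=[\mathbf{u}_h^{k},\mathbf{u}_h^{k-1},\mathbf{u}_h^{k-2}]^\top$ and $\alpha=\min\{\frac{C_l\nu\Delta t}{16C_P^2},\frac34\}$. Then for every $n\ge 0$, $$\|\mathcal{U}_{n+1}\|_G^2+\frac{\nu\Delta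 t}{4}\|\nabla \mathbf{u}_h^{n+1}\|^2+\frac{\nu\Delta t}{16}\|\nabla\mathbf{u}_h^{n}\|^2\le (1+\alpha)^{-(n+1)}\Big(\|\mathcal{U}_0\|_G^2+\frac{\nu\Delta t}{4}\|\nabla\mathbf{u}_h^{0}\|^2+\frac{\nu\Delta t}{16}\|\nabla\mathbf{u}_h^{-1}\|^2\Big)+\max\Big\{\frac{8C_P^2}{C_l\nu^2},\frac{2\nu^{-1}\Delta t}{3}\Big\}\|\mathbf{f}\|^2_{L^\infty(\mathbb{R}_+;\mathbf{V}_h^* )}.$$
   Context: $\Omega\subset\mathbb{R}^d$, $d\in\{2,3\}$, is a bounded connected Lipschitz domain; $\|\cdot\|$ and $(\cdot,\cdot)$ denote the $L^2(\Omega)$ norm and inner product. $\mathbf{X}=(H^1_0(\Omega))^d$, $Q=L^2_0(\Omega)$ (mean-zero $L^2$ functions). $C_P$ is the Poincaré–Friedrichs constant: $\|\mathbf{v}\|\le C_P\|\nabla\mathbf{v}\|$ for all $\mathbf{v}\in\mathbf{X}$ (also for scalar $H^1_0$ functions). $\mathbf{X}_h\subset\mathbf{X}$, $Q_h\subset Q$ are conforming finite element spaces on a regular triangulation satisfying the discrete inf-sup condition, and $\mathbf{V}_h=\{\mathbf{v}_h\in\mathbf{X}_h:(\nabla\cdot\mathbf{v}_h,q_h)=0\ \forall q_h\in Q_h\}$. The dual norm is $\|\mathbf{f}\|_{\mathbf{V}_h^*}=\sup_{0\ne\mathbf{v}_h\in\mathbf{V}_h}(\mathbf{f},\mathbf{v}_h)/\|\nabla\mathbf{v}_h\|$,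 and $L^\infty(\mathbb{R}_+;\mathbf{V}_h^* )$ is the space of $\mathbf{f}$ with $\|\mathbf{f}\|_{L^\infty(\mathbb{R}_+;\mathbf{V}_h^* )}:=\operatorname{ess\,sup}_{t>0}\|\mathbf{f}(t)\|_{\mathbf{V}_h^*}<\infty$ (and the bound holds at each $t^{n}$). The skew-symmetric trilinear form is $b_1(\mathbf{u},\mathbf{v},\mathbf{w})=\frac12\big(((\mathbf{u}\cdot\nabla)\mathbf{v},\mathbf{w})-((\mathbf{u}\cdot\nabla)\mathbf{w},\mathbf{v})\big)$. The $G$-matrix is $G=\frac{1}{12}\begin{pmatrix}19&-12&3\\-12&10&-3\\3&-3&1\end{pmatrix}$, and for $\mathcal{W}=[w_1,w_2,w_3]^\top$ with $w_i\in L^2(\Omega)$ (scalar or vector), $\|\mathcal{W}\|_G^2=\sum_{i,j=1}^3G_{ij}(w_i,w_j)$. The constants $0<C_l<C_u$ satisfy $C_l\|\mathcal{W}\|_G^2\le\|\mathcal{W}\|^2\le C_u\|\mathcal{W}\|_G^2$ for all such $\mathcal{W}$, where $\|\mathcal{W}\|^2=\sum_i\|w_i\|^2$. *)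

(* Defs.v *)
From Stdlib Require Export Reals ZArith.
Open Scope R_scope.

(* X  : carrier of the discrete velocity space X_h  (subset of (H^1_0)^d)
   Q  : carrier of the discrete pressure space Q_h  (subset of L^2_0)
   ip v w   = (v, w)              (L^2 inner product)
   gip v w  = (grad v, grad w)    (H^1_0 inner product)
   divp v q = (div v, q)
   conv u v w = ((u . grad) v, w) (convective trilinear form)
   qip p q  = (p, q)              (L^2 inner product on Q_h)            *)
Record FESpace := {
  X : Type;
  Q : Type;
  vzero : X;
  vadd : X -> X -> X;
  vscal : R -> X -> X;
  ip : X -> X -> R;
  gip : X -> X -> R;
  divp : X -> Q -> R;
  conv : X -> X -> X -> R;
  qip : Q -> Q -> R
}.

Arguments vzero {_}. Arguments vadd {_}. Arguments vscal {_}.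
Arguments ip {_}. Arguments gip {_}. Arguments divp {_}.
Arguments conv {_}. Arguments qip {_}.

Record FEAxioms (FS : FESpace) : Prop := {
  vadd_assoc : forall a b c : X FS, vadd a (vadd b c) = vadd (vadd a b) c;
  vadd_comm : forall a b : X FS, vadd a b = vadd b a;
  vadd_0 : forall a : X FS, vadd a vzero = a;
  vadd_opp : forall a : X FS, vadd a (vscal (-1) a) = vzero;
  vscal_1 : forall a : X FS, vscal 1 a = a;
  vscal_assoc : forall r s (a : X FS), vscal r (vscal s a) = vscal (r * s) a;
  vscal_addr : forall r (a b : X FS), vscal r (vadd a b) = vadd (vscal r a) (vscal r b);
  vscal_addl : forall r s (a : X FS), vscal (r + s) a = vadd (vscal r a) (vscal s a);
  ip_sym : forall a b : X FS, ip a b = ip b a;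
  ip_add : forall a b c : X FS, ip (vadd a b) c = ip a c + ip b c;
  ip_scal : forall r (a b : X FS), ip (vscal r a) b = r * ip a b;
  ip_nonneg : forall a : X FS, 0 <= ip a a;
  gip_sym : forall a b : X FS, gip a b = gip b a;
  gip_add : forall a b c : X FS, gip (vadd a b) c = gip a c + gip b c;
  gip_scal : forall r (a b : X FS), gip (vscal r a) b = r * gip a b;
  gip_nonneg : forall a : X FS, 0 <= gip a a;
  divp_add : forall (a b : X FS) q, divp (vadd a b) q = divp a q + divp b q;
  divp_scal : forall r (a : X FS) q, divp (vscal r a) q = r * divp a q;
  conv_add1 : forall a b c d : X FS, conv (vadd a b) c d = conv a c d + conv b c d;
  conv_scal1 : forall r (a c d : X FS), conv (vscal r a) c d = r * conv a c d;
  conv_add2 : forall a b c d : X FS, conv c (vadd a b) d = conv c a d + conv c b d;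
  conv_scal2 : forall r (a c d : X FS), conv c (vscal r a) d = r * conv c a d;
  conv_add3 : forall a b c d : X FS, conv c d (vadd a b) = conv c d a + conv c d b;
  conv_scal3 : forall r (a c d : X FS), conv c d (vscal r a) = r * conv c d a;
  qip_nonneg : forall q : Q FS, 0 <= qip q q;
  inf_sup : exists beta, 0 < beta /\
     forall q : Q FS, exists v : X FS, 0 < gip v v /\
       beta * sqrt (qip q q) * sqrt (gip v v) <= divp v q
}.

Definition b1 {FS : FESpace} (u v w : X FS) : R :=
  / 2 * (conv u v w - conv u w v).

Definition in_Vh {FS : FESpace} (v : X FS) : Prop :=
  forall q : Q FS, divp v q = 0.

Definition Gmat (i j : nat) : R :=
  match i, j with
  | 1, 1 => 19/12 | 1, 2 => -12/12 | 1, 3 => 3/12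
  | 2, 1 => -12/12 | 2, 2 => 10/12 | 2, 3 => -3/12
  | 3, 1 => 3/12 | 3, 2 => -3/12 | 3, 3 => 1/12
  | _, _ => 0
  end.

Definition Gnorm2 {FS : FESpace} (w1 w2 w3 : X FS) : R :=
  let w i := match i with 1%nat => w1 | 2%nat => w2 | _ => w3 end in
  sum_f_R0 (fun i => sum_f_R0 (fun j =>
     Gmat (Datatypes.S i) (Datatypes.S j) * ip (w (Datatypes.S i)) (w (Datatypes.S j))) 2) 2.

Definition L2sq3 {FS : FESpace} (w1 w2 w3 : X FS) : R :=
  ip w1 w1 + ip w2 w2 + ip w3 w3.

Definition vlin4 {FS : FESpace} (a : R) (x : X FS) (b : R) (y : X FS)
  (c : R) (z : X FS) (d : R) (w : X FS) : X FS :=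
  vadd (vadd (vadd (vscal a x) (vscal b y)) (vscal c z)) (vscal d w).

Definition vlin3 {FS : FESpace} (a : R) (x : X FS) (b : R) (y : X FS)
  (c : R) (z : X FS) : X FS :=
  vadd (vadd (vscal a x) (vscal b y)) (vscal c z).

(* Main.v *)
Require Import Defs.
From Stdlib Require Import Reals ZArith Lra Lia.
Open Scope R_scope.

Lemma ip_add_r (FS : FESpace) (HS : FEAxioms FS) (a b c : X FS) :
  ip a (vadd b c) = ip a b + ip a c.
Proof. rewrite (ip_sym _ HS a), (ip_sym _ HS a b), (ip_sym _ HS a c). apply (ip_add _ HS). Qed.
Lemma ip_scal_r (FS : FESpace) (HS : FEAxioms FS) r (a b : X FS) :
  ip a (vscal r b) = r * ip a b.
Proof. rewrite (ip_sym _ HS a), (ip_sym _ HS a b). apply (ip_scal _ HS). Qed.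

Lemma key (FS : FESpace) (HS : FEAxioms FS) (a b c d : X FS) :
  Gnorm2 a b c - Gnorm2 b c d <= ip (vlin4 (5/3) a (-(5/2)) b 1 c (-(1/6)) d) a.
Proof.
  pose proof ip_nonneg _ HS (vlin4 1 a (-3) b 3 c (-1) d) as H.
  unfold Gnorm2, vlin4 in *. simpl.
  rewrite ?(ip_add _ HS), ?(ip_scal _ HS), ?(ip_add_r _ HS), ?(ip_scal_r _ HS) in *.
  rewrite ?(ip_add _ HS), ?(ip_scal _ HS), ?(ip_add_r _ HS), ?(ip_scal_r _ HS) in *.
  try rewrite (ip_sym _ HS b a) in *; try rewrite (ip_sym _ HS c a) in *; try rewrite (ip_sym _ HS d a) in *; try rewrite (ip_sym _ HS c b) in *; try rewrite (ip_sym _ HS d b) in *; try rewrite (ip_sym _ HS d c) in *.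
  lra.
Qed.

Theorem theorem1
  (FS : FESpace) (HS : FEAxioms FS)
  (CP Cl Cu : R) (HCP : 0 < CP)
  (HPoinc : forall v : X FS, ip v v <= CP ^ 2 * gip v v)
  (HCl : 0 < Cl) (HClu : Cl < Cu)
  (HGeq : forall w1 w2 w3 : X FS,
      Cl * Gnorm2 w1 w2 w3 <= L2sq3 w1 w2 w3 /\
      L2sq3 w1 w2 w3 <= Cu * Gnorm2 w1 w2 w3)
  (nu dt : R) (Hnu : 0 < nu) (Hdt : 0 < dt)
  (f : R -> X FS -> R)
  (Hf_lin : forall t (a b : X FS) r,
      f t (vadd a b) = f t a + f t b /\ f t (vscal r a) = r * f t a)
  (Fnorm : R) (HF0 : 0 <= Fnorm)
  (HF : forall k : nat, forall v : X FS, in_Vh v ->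
      Rabs (f (INR (S k) * dt) v) <= Fnorm * sqrt (gip v v))
  (u : Z -> X FS) (p : Z -> Q FS)
  (Hinit1 : u 0%Z = u (-1)%Z) (Hinit2 : u (-1)%Z = u (-2)%Z)
  (Hinit3 : in_Vh (u 0%Z))
  (Hmom : forall n : nat, let N := Z.of_nat n in
     forall v : X FS,
       ip (vlin4 (5/3) (u (N + 1)%Z) (-(5/2)) (u N) 1 (u (N - 1)%Z)
                 (-(1/6)) (u (N - 2)%Z)) v / dt
       + nu * gip (u (N + 1)%Z) v
       + b1 (vlin3 3 (u N) (-3) (u (N - 1)%Z) 1 (u (N - 2)%Z)) (u (N + 1)%Z) v
       - divp v (p (N + 1)%Z)
       = f (INR (S n) * dt) v)
  (Hdiv : forall n : nat, forall q : Q FS, divp (u (Z.of_nat n + 1)%Z) q = 0) :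
  let alpha := Rmin (Cl * nu * dt / (16 * CP ^ 2)) (3/4) in
  forall n : nat, let N := Z.of_nat n in
    Gnorm2 (u (N + 1)%Z) (u N) (u (N - 1)%Z)
    + nu * dt / 4 * gip (u (N + 1)%Z) (u (N + 1)%Z)
    + nu * dt / 16 * gip (u N) (u N)
    <= / (1 + alpha) ^ (S n) *
         (Gnorm2 (u 0%Z) (u (-1)%Z) (u (-2)%Z)
          + nu * dt / 4 * gip (u 0%Z) (u 0%Z)
          + nu * dt / 16 * gip (u (-1)%Z) (u (-1)%Z))
       + Rmax (8 * CP ^ 2 / (Cl * nu ^ 2)) (2 * / nu * dt / 3) * Fnorm ^ 2.
Proof.
  intros alpha.
  set (A := Cl * nu * dt / (16 * CP ^ 2)).
  assert (HA : 0 < A) by (unfold A; apply Rdiv_lt_0_compat; [repeat apply Rmult_lt_0_compat; lra | apply Rmult_lt_0_compat; [lra | apply pow_lt; lra]]).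
  assert (Hal0 : 0 < alpha) by (unfold alpha; apply Rmin_glb_lt; [exact HA | lra]).
  assert (HalA : alpha <= A) by apply Rmin_l.
  assert (Hal34 : alpha <= 3/4) by apply Rmin_r.
  set (K := dt * Fnorm ^ 2 / (2 * nu)).
  assert (HK : 0 <= K) by (unfold K; apply Rmult_le_pos; [nra | left; apply Rinv_0_lt_compat; lra]).
  set (E := fun m : Z => Gnorm2 (u m) (u (m - 1)%Z) (u (m - 2)%Z)
            + nu * dt / 4 * gip (u m) (u m) + nu * dt / 16 * gip (u (m-1)%Z) (u (m-1)%Z)).
  assert (Hstep : forall n : nat, let N := Z.of_nat n in
     (1 + alpha) * E (N + 1)%Z <= E N + K).
  { intros m N.
    set (a := u (N + 1)%Z). set (b := u N). set (c := u (N - 1)%Z). set (d := u (N - 2)%Z).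
    assert (Ha : in_Vh a) by (intro q; apply Hdiv).
    pose proof (Hmom m a) as Hm. cbv zeta in Hm. fold N a b c d in Hm.
    assert (Hb1 : b1 (vlin3 3 b (-3) c 1 d) a a = 0) by (unfold b1; lra).
    rewrite Hb1, (Ha (p (N + 1)%Z)) in Hm.
    pose proof (HF m a Ha) as Hf.
    pose proof (key FS HS a b c d) as Hk.
    set (ga := gip a a). set (gb := gip b b). set (gc := gip c c).
    assert (Hga : 0 <= ga) by apply (gip_nonneg _ HS).
    assert (Hgb : 0 <= gb) by apply (gip_nonneg _ HS).
    assert (Hgc : 0 <= gc) by apply (gip_nonneg _ HS).
    set (s := sqrt ga).
    assert (Hs2 : s * s = ga) by (apply sqrt_sqrt; lra).
    set (I := ip (vlin4 (5 / 3) a (- (5 / 2)) b 1 c (- (1 / 6)) d) a) in *.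
    set (ft := f (INR (S m) * dt) a) in *.
    assert (Hft : ft <= Fnorm * s) by (pose proof (Rle_abs ft); fold ga s in Hf; lra).
    assert (HI : I = dt * (ft - nu * ga)).
    { fold ga in Hm. assert (HH : I / dt = ft - nu * ga) by lra.
      rewrite <- HH. field. lra. }
    assert (Hyoung : Fnorm * s <= nu / 2 * ga + Fnorm ^ 2 / (2 * nu)).
    { rewrite <- Hs2. apply (Rmult_le_reg_l (2 * nu)); [lra|].
      replace (2 * nu * (nu / 2 * (s * s) + Fnorm ^ 2 / (2 * nu))) with (nu^2 * (s*s) + Fnorm ^ 2) by (field; lra).
      pose proof (pow2_ge_0 (nu * s - Fnorm)). nra. }
    assert (HG1 : Gnorm2 a b c - Gnorm2 b c d + nu * dt / 2 * ga <= K).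
    { unfold K. assert (dt * ft <= dt * (nu / 2 * ga + Fnorm ^ 2 / (2 * nu))) by (apply Rmult_le_compat_l; lra).
      replace (dt * Fnorm ^ 2 / (2 * nu)) with (dt * (Fnorm ^ 2 / (2 * nu))) by (field; lra).
      nra. }
    destruct (HGeq a b c) as [HC1 _].
    unfold L2sq3 in HC1.
    pose proof (HPoinc a) as Pa. pose proof (HPoinc b) as Pb. pose proof (HPoinc c) as Pc.
    fold ga gb gc in Pa, Pb, Pc.
    set (Ga := Gnorm2 a b c) in *.
    assert (HaG : alpha * Ga <= nu * dt / 16 * (ga + gb + gc)).
    { assert (Ga <= CP ^ 2 * (ga + gb + gc) / Cl).
      { apply (Rmult_le_reg_l Cl); [lra|].
        replace (Cl * (CP ^ 2 * (ga + gb + gc) / Cl)) with (CP ^ 2 * (ga + gb + gc)) by (field; lra).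
        lra. }
      assert (alpha * CP ^ 2 / Cl <= nu * dt / 16).
      { apply (Rmult_le_reg_l (Cl / CP ^ 2)). apply Rdiv_lt_0_compat; nra.
        replace (Cl / CP ^ 2 * (alpha * CP ^ 2 / Cl)) with alpha by (field; split; nra).
        unfold A in HalA. replace (Cl / CP ^ 2 * (nu * dt / 16)) with (Cl * nu * dt / (16 * CP ^ 2)) by (field; nra). lra. }
      apply Rle_trans with (alpha * (CP ^ 2 * (ga + gb + gc) / Cl)).
      apply Rmult_le_compat_l; lra.
      replace (alpha * (CP ^ 2 * (ga + gb + gc) / Cl)) with (alpha * CP ^ 2 / Cl * (ga + gb + gc)) by (field; lra).
      apply Rmult_le_compat_r; lra. }
    assert (Hnd : 0 <= nu * dt) by (apply Rmult_le_pos; lra).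
    assert (alpha * (nu * dt * ga) <= 3/4 * (nu * dt * ga)) by (apply Rmult_le_compat_r; [apply Rmult_le_pos|]; lra).
    assert (alpha * (nu * dt * gb) <= 3/4 * (nu * dt * gb)) by (apply Rmult_le_compat_r; [apply Rmult_le_pos|]; lra).
    unfold E.
    replace (N + 1 - 1)%Z with N by ring.
    replace (N + 1 - 2)%Z with (N - 1)%Z by ring.
    fold a b c d. fold ga gb gc. fold Ga. assert (0 <= nu * dt * gb) by (apply Rmult_le_pos; lra). lra. }
  assert (Hit : forall m : nat, E (Z.of_nat m) <= / (1 + alpha) ^ m * E 0%Z + K / alpha).
  { induction m as [|m IH].
    - simpl. rewrite Rinv_1. assert (0 <= K / alpha) by (unfold Rdiv; apply Rmult_le_pos; [lra | left; apply Rinv_0_lt_compat; lra]). lra.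
    - rewrite Nat2Z.inj_succ, <- Z.add_1_r.
      pose proof (Hstep m) as Hs. simpl in Hs.
      assert (Hpos : 0 < (1 + alpha) ^ m) by (apply pow_lt; lra).
      apply (Rmult_le_reg_l (1 + alpha)); [lra|].
      apply Rle_trans with (E (Z.of_nat m) + K); [exact Hs|].
      replace ((1 + alpha) * (/ (1 + alpha) ^ S m * E 0%Z + K / alpha))
        with (/ (1 + alpha) ^ m * E 0%Z + K / alpha + K).
      + lra.
      + simpl. field. split; lra. }
  intros n N.
  pose proof (Hit (S n)) as H. rewrite Nat2Z.inj_succ, <- Z.add_1_r in H. fold N in H.
  unfold E in H.
  replace (N + 1 - 1)%Z with N in H by ring.
  replace (N + 1 - 2)%Z with (N - 1)%Z in H by ring.
  assert (HKa : K / alpha <= Rmax (8 * CP ^ 2 / (Cl * nu ^ 2)) (2 * / nu * dt / 3) * Fnorm ^ 2).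
  { unfold K. unfold alpha. apply Rmin_case.
    - apply Rle_trans with (8 * CP ^ 2 / (Cl * nu ^ 2) * Fnorm ^ 2).
      + right. field. repeat split; nra.
      + apply Rmult_le_compat_r; [nra | apply Rmax_l].
    - apply Rle_trans with (2 * / nu * dt / 3 * Fnorm ^ 2).
      + right. field. lra.
      + apply Rmult_le_compat_r; [nra | apply Rmax_r]. }
  eapply Rle_trans; [exact H|]. apply Rplus_le_compat_l. exact HKa.
Qed.
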